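(* For every two-player stage game $G$: if $G\in\mathcal{G}_{LS}^{m,p}$ then $G\in\mathcal{G}_{LS}^{m,m}$; that is, $\mathcal{G}_{LS}^{m,p}\subseteq\mathcal{G}_{LS}^{m,m}$.
   Context: A two-player stage game $G$ has finite nonempty action sets $A_1,A_2$ and payoffs $u_1,u_2:A_1\times A_2\to\mathbb{R}$, extended to mixed strategies by expectation. $G(T)$ is the $T$-round repetition with realized actions observed each round and payoffs the expected sum of stage payoffs; an SPE of $G(T)$ is a strategy profile whose continuation after every history of length $k<T$ is a Nash equilibrium of $G(T-k)$. Regimes: pure-pure ($p,p$): both players restricted to actions (in the stage game and in every round, including deviations); mixed-pure ($m,p$): player 1 may mix, player 2 uses only actions; mixed-mixed ($m,m$): both may mix. For regime $r$, $\mathrm{Nash}^r(G)$ is the set of stage-game profiles available in $r$ from which no player can profitably deviate unilaterally to a strategy available in $r$. Locally suboptimal behavior occurs in an SPE $\mu$ of $G(T)$ (regime $r$) if for some history $h$ of length $k<T$, $(\mu_1(h),\mu_2(h))\notin\mathrm{Nash}^r(G)$. $\mathcal{G}_{LS}^r$ is the set of stage games $G$ for which there exist $T\ge1$ and an SPE of $G(T)$ in regime $r$ in which locally suboptimal behavior occurs. *)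

(* Defs.v *)
From mathcomp Require Import all_boot all_order all_algebra.
From mathcomp Require Import reals.
Set Implicit Arguments. Unset Strict Implicit. Unset Printing Implicit Defensive.
Import Order.TTheory GRing.Theory Num.Theory.
Local Open Scope ring_scope.

Section RepeatedGames.
Variable R : realType.
Variables A1 A2 : finType.

Definition is_mixed (A : finType) (p : A -> R) : Prop :=
  (forall a, 0 <= p a) /\ \sum_(a : A) p a = 1.

Definition is_pure (A : finType) (p : A -> R) : Prop :=
  exists a0 : A, forall a, p a = (a == a0)%:R.

Definition avail (mix : bool) (A : finType) (p : A -> R) : Prop :=
  if mix then is_mixed p else is_pure p.

(* Regime: (player 1 may mix, player 2 may mix). *)
Definition regime := (bool * bool)%type.
Definition reg_pp : regime := (false, false).
Definition reg_mp : regime := (true, false).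
Definition reg_mm : regime := (true, true).

Definition stage_payoff (u : A1 -> A2 -> R) (p1 : A1 -> R) (p2 : A2 -> R) : R :=
  \sum_(a1 : A1) \sum_(a2 : A2) p1 a1 * p2 a2 * u a1 a2.

Definition stage_Nash (r : regime) (u1 u2 : A1 -> A2 -> R)
  (p1 : A1 -> R) (p2 : A2 -> R) : Prop :=
  [/\ avail r.1 p1, avail r.2 p2,
      (forall q1 : A1 -> R, avail r.1 q1 -> stage_payoff u1 q1 p2 <= stage_payoff u1 p1 p2)
    & (forall q2 : A2 -> R, avail r.2 q2 -> stage_payoff u2 p1 q2 <= stage_payoff u2 p1 p2)].

(* Histories: sequences of realized action profiles (oldest first). *)
Definition history := seq (A1 * A2).

Definition strat1 := history -> A1 -> R.
Definition strat2 := history -> A2 -> R.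

Definition strat_avail (mix : bool) (A : finType) (s : history -> A -> R) : Prop :=
  forall h, avail mix (s h).

Fixpoint value (u : A1 -> A2 -> R) (s1 : strat1) (s2 : strat2) (h : history)
  (n : nat) : R :=
  match n with
  | 0 => 0
  | n'.+1 => \sum_(a1 : A1) \sum_(a2 : A2)
              s1 h a1 * s2 h a2 * (u a1 a2 + value u s1 s2 (rcons h (a1, a2)) n')
  end.

Definition rep_payoff (u : A1 -> A2 -> R) (s1 : strat1) (s2 : strat2) (n : nat) : R :=
  value u s1 s2 [::] n.

Definition rep_Nash (r : regime) (u1 u2 : A1 -> A2 -> R) (n : nat)
  (s1 : strat1) (s2 : strat2) : Prop :=
  [/\ strat_avail r.1 s1, strat_avail r.2 s2,
      (forall t1 : strat1, strat_avail r.1 t1 ->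
          rep_payoff u1 t1 s2 n <= rep_payoff u1 s1 s2 n)
    & (forall t2 : strat2, strat_avail r.2 t2 ->
          rep_payoff u2 s1 t2 n <= rep_payoff u2 s1 s2 n)].

Definition cont (A : finType) (s : history -> A -> R) (h : history) : history -> A -> R :=
  fun h' => s (h ++ h').

Definition SPE (r : regime) (u1 u2 : A1 -> A2 -> R) (T : nat)
  (s1 : strat1) (s2 : strat2) : Prop :=
  [/\ strat_avail r.1 s1, strat_avail r.2 s2 &
      forall h : history, (size h < T)%N ->
        rep_Nash r u1 u2 (T - size h) (cont s1 h) (cont s2 h)].

Definition locally_suboptimal (r : regime) (u1 u2 : A1 -> A2 -> R) (T : nat)
  (s1 : strat1) (s2 : strat2) : Prop :=
  exists h : history, (size h < T)%N /\ ~ stage_Nash r u1 u2 (s1 h) (s2 h).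

Definition in_GLS (r : regime) (u1 u2 : A1 -> A2 -> R) : Prop :=
  exists T : nat, (1 <= T)%N /\
    exists (s1 : strat1) (s2 : strat2),
      SPE r u1 u2 T s1 s2 /\ locally_suboptimal r u1 u2 T s1 s2.

End RepeatedGames.

(* Main.v *)
Require Import Defs.
From mathcomp Require Import all_boot all_order all_algebra.
From mathcomp Require Import reals.
Set Implicit Arguments. Unset Strict Implicit. Unset Printing Implicit Defensive.
Import Order.TTheory GRing.Theory Num.Theory.

Section Aux.
Local Open Scope ring_scope.
Variable R : realType.
Variables A1 A2 : finType.

Lemma pure_mixed (A : finType) (p : A -> R) : is_pure p -> is_mixed p.
Proof.
case=> a0 Hp; split=> [a|]; first by rewrite Hp ler0n.
rewrite (bigD1 a0) //= Hp eqxx big1 ?addr0 // => a /negbTE Ha.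
by rewrite Hp Ha.
Qed.

Variable u : A1 -> A2 -> R.
Variable s1 : strat1 R A1 A2.
Variable a0 : A2.
Variable N : nat.

Fixpoint V (h : history A1 A2) (k : nat) : R :=
  match k with
  | 0 => 0
  | k'.+1 =>
    let W := fun a2 => \sum_(a1 : A1) s1 h a1 * (u a1 a2 + V (rcons h (a1, a2)) k') in
    W [arg max_(a > a0) W a]%O
  end.

Definition Wf h k a2 := \sum_(a1 : A1) s1 h a1 * (u a1 a2 + V (rcons h (a1, a2)) k).
Definition best h k := [arg max_(a > a0) Wf h k a]%O.

Lemma VS h k : V h k.+1 = Wf h k (best h k).
Proof. by []. Qed.

Lemma best_max h k a : Wf h k a <= Wf h k (best h k).
Proof.
rewrite /best.
by case: (@arg_maxP _ R A2 a0 xpredT (Wf h k) isT) => i _ H; apply: H.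
Qed.

Definition tstar : strat2 R A1 A2 :=
  fun h a => (a == best h (N - size h).-1)%:R.

Lemma tstar_pure : strat_avail false tstar.
Proof. by move=> h; exists (best h (N - size h).-1). Qed.

Hypothesis s1pos : forall h a, 0 <= s1 h a.

Lemma upper k : forall h (t2 : strat2 R A1 A2), strat_avail true t2 ->
  value u s1 t2 h k <= V h k.
Proof.
elim: k => [|k IH] h t2 Ht2 //=.
have [t2pos t2sum] := Ht2 h.
apply: (@le_trans _ _ (\sum_a1 \sum_a2 s1 h a1 * t2 h a2 *
    (u a1 a2 + V (rcons h (a1, a2)) k))).
  apply: ler_sum => a1 _; apply: ler_sum => a2 _.
  by apply: ler_wpM2l; [apply: mulr_ge0 | rewrite lerD2l; apply: IH].
rewrite exchange_big /=.
apply: (@le_trans _ _ (\sum_a2 t2 h a2 * Wf h k (best h k))).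
  apply: ler_sum => a2 _.
  apply: (@le_trans _ _ (t2 h a2 * Wf h k a2)); last first.
    by apply: ler_wpM2l => //; apply: best_max.
  rewrite /Wf mulr_sumr; rewrite le_eqVlt; apply/orP; left; apply/eqP; apply: eq_bigr => a1 _.
  by rewrite mulrA (mulrC (t2 h a2)).
by rewrite -mulr_suml t2sum mul1r.
Qed.

Lemma exact k : forall h, (size h + k)%N = N -> value u s1 tstar h k = V h k.
Proof.
elim: k => [|k IH] h Hs //=.
have E : (N - size h).-1 = k by rewrite -Hs addnC addnK.
have Ht : forall a, tstar h a = (a == best h k)%:R by move=> a; rewrite /tstar E.
rewrite /Wf; apply: eq_bigr => a1 _.
rewrite (bigD1 (best h k)) //= Ht eqxx mulr1 big1 ?addr0.
  by rewrite IH // size_rcons addSnnS.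
by move=> a /negbTE Ha; rewrite Ht Ha mulr0 mul0r.
Qed.

End Aux.

Theorem mainTheorem13 (R : realType) (A1 A2 : finType)
  (u1 u2 : A1 -> A2 -> R) :
  (0 < #|A1|)%N -> (0 < #|A2|)%N ->
  in_GLS reg_mp u1 u2 -> in_GLS reg_mm u1 u2.
Proof.
move=> _ /card_gt0P [a0 _] [T [T1 [s1 [s2 [[av1 av2 Hspe] [h [hT hLS]]]]]]].
exists T; split => //; exists s1, s2; split.
  split => //.
    by move=> h'; apply: pure_mixed; apply: av2.
  move=> h' hT'; have [c1 c2 N1 N2] := Hspe h' hT'.
  split => //.
    by move=> h''; apply: pure_mixed; apply: c2.
  move=> t2 at2.
  set n := (T - size h')%N.
  have s1pos : forall hh a, (0 <= cont s1 h' hh a)%R by move=> hh a; case: (c1 hh).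
  apply: (le_trans (@upper R A1 A2 u2 (cont s1 h') a0 s1pos n [::] t2 at2)).
  rewrite -(@exact R A1 A2 u2 (cont s1 h') a0 n n [::] (erefl _)).
  by apply: N2; apply: tstar_pure.
exists h; split => // HN; apply: hLS.
case: HN => p1 p2 D1 D2; split.
- exact: p1.
- exact: (av2 h).
- exact: D1.
- move=> q2 /pure_mixed Hq; exact: D2.
Qed.
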